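(* For every $n\ge 1$, $\gamma_{\rm i}(P_n)=\lceil n/2\rceil$, where $P_n$ is the path on $n$ vertices.
   Context: Indicated domination game on a graph $G$: two players, Dominator and Staller, alternate. In each round Dominator indicates a vertex $v$ not yet dominated by the vertices previously selected by Staller (a vertex dominates itself and its neighbors), and Staller must select a vertex of the closed neighborhood $N[v]$, adding it to a set $D$. The game ends when $D$ is a dominating set of $G$. Dominator wants to minimize $|D|$ and Staller to maximize it; the size of $D$ under optimal play of both is the indicated domination number $\gamma_{\rm i}(G)$. *)

(* Defs.v *)
From mathcomp Require Import all_boot.
Set Implicit Arguments. Unset Strict Implicit. Unset Printing Implicit Defensive.

Definition closed_nbhd (T : finType) (e : rel T) (v : T) : {set T} :=
  [set u | (u == v) || e v u].

Definition dominated (T : finType) (e : rel T) (D : {set T}) (v : T) : bool :=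
  [exists u in D, (u == v) || e u v].

Definition dominating (T : finType) (e : rel T) (D : {set T}) : bool :=
  [forall v, dominated e D v].

(* Value of the indicated domination game from position D (the set of
   vertices selected so far by Staller), with fuel k.  Dominator (min)
   indicates an undominated vertex v, Staller (max) selects u in N[v].
   Every move dominates a new vertex, so fuel #|T| suffices. *)
Fixpoint ind_val (T : finType) (e : rel T) (k : nat) (D : {set T}) : nat :=
  match k with
  | 0 => #|D|
  | k'.+1 =>
      if dominating e D then #|D|
      else \big[minn/#|T|]_(v | ~~ dominated e D v)
             \max_(u in closed_nbhd e v) ind_val e k' (u |: D)
  end.

Definition gamma_i (T : finType) (e : rel T) : nat := ind_val e #|T| set0.

Definition path_rel (n : nat) : rel 'I_n :=
  fun i j => (i.+1 == j :> nat) || (j.+1 == i :> nat).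
Arguments path_rel n : clear implicits.

(* Main.v *)
Require Import Defs.
From mathcomp Require Import all_boot zify.
Set Implicit Arguments. Unset Strict Implicit. Unset Printing Implicit Defensive.

Section P.
Variable n : nat.
Local Notation e := (path_rel n).
Local Notation dom := (dominated (path_rel n)).

Lemma dominatedU1 (D : {set 'I_n}) (u x : 'I_n) :
  dom (u |: D) x = dom D x || (nat_of_ord u == nat_of_ord x) || (u.+1 == x) || (x.+1 == u).
Proof.
rewrite /dominated; apply/idP/idP.
- move/existsP=> [y /andP[]]; rewrite in_setU1 => /orP[/eqP->|yD] H.
  + by move: H; rewrite /path_rel; case/orP=> [/eqP->|/orP[]->]; rewrite ?eqxx !orbT.
  + by apply/orP; left; apply/orP; left; apply/orP; left; apply/existsP; exists y; rewrite yD H.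
- case/orP => [/orP[/orP[/existsP[y /andP[yD H]] | H] | H] | H]; apply/existsP.
  + by exists y; rewrite in_setU1 yD orbT H.
  + by exists u; rewrite in_setU1 eqxx /=; apply/orP; left.
  + by exists u; rewrite in_setU1 eqxx /= /path_rel H !orbT.
  + by exists u; rewrite in_setU1 eqxx /= /path_rel H !orbT.
Qed.


Lemma path_relC (x y : 'I_n) : e x y = e y x.
Proof. by rewrite /path_rel orbC. Qed.

Lemma path_rel_odd (x y : 'I_n) : e x y -> odd x = ~~ odd y.
Proof. by rewrite /path_rel => /orP[]/eqP <-; rewrite /= ?negbK. Qed.

Lemma mem_dom (D : {set 'I_n}) x : x \in D -> dom D x.
Proof. by move=> xD; apply/existsP; exists x; rewrite xD eqxx. Qed.

Lemma nbhd_dom (D : {set 'I_n}) u v : u \in closed_nbhd e v -> dom (u |: D) v.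
Proof.
rewrite inE => H; apply/existsP; exists u; rewrite in_setU1 eqxx /=.
by case/orP: H => [->//|]; rewrite path_relC => ->; rewrite orbT.
Qed.

Lemma nbhd_notin (D : {set 'I_n}) u v : ~~ dom D v -> u \in closed_nbhd e v -> u \notin D.
Proof.
move=> nd H; apply/negP => uD; move/negP: nd; apply; apply/existsP; exists u.
move: H; rewrite inE uD /= => /orP[->//|]; rewrite path_relC => ->; by rewrite orbT.
Qed.

Lemma dom_sub (D : {set 'I_n}) u x : dom D x -> dom (u |: D) x.
Proof. by move=> H; rewrite dominatedU1 H. Qed.

Definition cnt (D : {set 'I_n}) (x : 'I_n) :=
  ~~ dom D x && (~~ odd x || [forall y, e x y ==> dom D y]).
Definition gpot (D : {set 'I_n}) := #|[set x | cnt D x]|.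

Lemma gpot_le_und D : gpot D <= #|[set x | ~~ dom D x]|.
Proof. by apply: subset_leq_card; apply/subsetP => x; rewrite !inE => /andP[]. Qed.

Lemma gpot_step D u :
  gpot D <= gpot (u |: D) + #|[set x | cnt D x && dom (u |: D) x]|.
Proof.
apply: leq_trans (leq_card_setU _ _).
apply: subset_leq_card; apply/subsetP => x; rewrite !inE.
case/andP => nd H; case: (boolP (dom (u |: D) x)) => H2.
  by apply/orP; right; rewrite /cnt nd H.
rewrite andbF orbF /cnt H2 /=; case/orP: H => [->//|/forallP H]; apply/orP; right.
apply/forallP => y; apply/implyP => /(implyP (H y)); exact: dom_sub.
Qed.

Lemma staller D v : ~~ dom D v ->
  exists2 u, u \in closed_nbhd e v & #|[set x | cnt D x && dom (u |: D) x]| <= 1.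
Proof.
move=> nv.
case: (boolP (~~ odd v || [forall y, e v y ==> dom D y])) => Hv.
- exists v; first by rewrite inE eqxx.
  rewrite -(cards1 v); apply: subset_leq_card; apply/subsetP => x; rewrite !inE.
  case/andP => /andP[nx cx]; rewrite dominatedU1 (negbTE nx) /=.
  case/orP => [/orP[]|]; first by move=> H; apply/eqP/val_inj/eqP; rewrite eq_sym.
  + move=> H; have exv : e x v by rewrite /path_rel eq_sym H orbT.
    exfalso; case/orP: Hv => Hv.
    * move: cx; rewrite (path_rel_odd exv) (negbTE Hv) /=.
      by move/forallP/(_ v); rewrite exv /= (negbTE nv).
    * by move: nx; move/forallP: Hv => /(_ x); rewrite path_relC exv /= => ->.
  + move=> H; have exv : e x v by rewrite /path_rel H.
    exfalso; case/orP: Hv => Hv.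
    * move: cx; rewrite (path_rel_odd exv) (negbTE Hv) /=.
      by move/forallP/(_ v); rewrite exv /= (negbTE nv).
    * by move: nx; move/forallP: Hv => /(_ x); rewrite path_relC exv /= => ->.
- rewrite negb_or negbK in Hv; case/andP: Hv => ov /forallPn [y].
  rewrite negb_imply => /andP[evy ny].
  exists y; first by rewrite inE evy orbT.
  have ey : ~~ odd y by rewrite -(path_rel_odd evy) ov.
  rewrite -(cards1 y); apply: subset_leq_card; apply/subsetP => x; rewrite !inE.
  case/andP => /andP[nx cx]; rewrite dominatedU1 (negbTE nx) /=.
  have H0 : e x y -> False.
    move=> exy; move: cx; rewrite (path_rel_odd exy) ey /=.
    by move/forallP/(_ y); rewrite exy /= (negbTE ny).
  case/orP => [/orP[]|]; first by move=> H; apply/eqP/val_inj/eqP; rewrite eq_sym.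
  + by move=> H; exfalso; apply: H0; rewrite /path_rel eq_sym H orbT.
  + by move=> H; exfalso; apply: H0; rewrite /path_rel H.
Qed.

Lemma bigmin_geq (I : finType) (P : pred I) (F : I -> nat) x b :
  b <= x -> (forall i, P i -> b <= F i) -> b <= \big[minn/x]_(i | P i) F i.
Proof.
move=> bx H; apply: (big_ind (fun y => b <= y)) => //.
by move=> y z hy hz; rewrite leq_min hy hz.
Qed.

Lemma bigmin_leq (I : finType) (P : pred I) (F : I -> nat) x j :
  P j -> \big[minn/x]_(i | P i) F i <= F j.
Proof.
move=> Pj; rewrite -big_filter.
have : j \in [seq i <- index_enum I | P i] by rewrite mem_filter Pj mem_index_enum.
elim: [seq i <- index_enum I | P i] => [//|a r IH]; rewrite big_cons inE.
case/orP => [/eqP->|/IH H]; first exact: geq_minl.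
exact: leq_trans (geq_minr _ _) H.
Qed.

Lemma bigmin_leq2 (I : finType) (P : pred I) (F : I -> nat) x j b :
  P j -> F j <= b -> \big[minn/x]_(i | P i) F i <= b.
Proof. by move=> Pj H; apply: leq_trans (@bigmin_leq I P F x j Pj) H. Qed.

Lemma und0 (D : {set 'I_n}) : #|[set x | ~~ dom D x]| <= 0 -> gpot D = 0.
Proof. by move=> H; apply/eqP; rewrite -leqn0; apply: leq_trans (gpot_le_und D) H. Qed.

Lemma LB k (D : {set 'I_n}) :
  #|[set x | ~~ dom D x]| <= k -> #|D| + gpot D <= ind_val e k D.
Proof.
elim: k D => [|k IH] D HU /=; first by rewrite und0 // addn0.
case: ifP => Hd.
  rewrite und0 ?addn0 //; rewrite leqn0 cards_eq0; apply/eqP/setP => x.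
  by rewrite !inE; move/forallP: Hd => ->.
apply: bigmin_geq.
  rewrite -(cardsC D) leq_add2l; apply: leq_trans (gpot_le_und D) _.
  apply: subset_leq_card; apply/subsetP => x; rewrite !inE; apply: contra.
  exact: mem_dom.
move=> v nv; have [u Hu Hc] := staller nv.
apply: leq_trans (leq_bigmax_cond _ Hu).
have uD := nbhd_notin nv Hu.
apply: leq_trans (IH _ _); last first.
  have : #|[set x | ~~ dom (u |: D) x]| <= #|[set x | ~~ dom D x] :\ v|.
    apply: subset_leq_card; apply/subsetP => x; rewrite !inE => H.
    rewrite (contra (@dom_sub D u x) H) andbT.
    by apply: contraNneq H => ->; exact: nbhd_dom.
  move=> H; rewrite -ltnS; apply: leq_trans HU.
  by rewrite (cardsD1 v [set x | ~~ dom D x]) inE nv add1n ltnS.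
rewrite cardsU1 uD add1n addSn -addnS leq_add2l.
by apply: leq_trans (gpot_step D u) _; rewrite -addn1 leq_add2l.
Qed.

Lemma card_U1 (D : {set 'I_n}) u : #|u |: D| <= #|D| + 1.
Proof. by rewrite cardsU1 addnC leq_add2l leq_b1. Qed.

Lemma UB k :
  (forall D m, (forall x : 'I_n, dom D x = (x < m)) ->
     ind_val e k D <= #|D| + (n - m + 1) %/ 2) /\
  (forall D m, m < n -> (forall x : 'I_n, dom D x = (x < m + 4) && (x != m :> nat)) ->
     ind_val e k D <= #|D| + 1 + (n - (m + 4) + 1) %/ 2).
Proof.
elim: k => [|k [IHB IHC]]; split => D m /=.
- by move=> _; rewrite leq_addr.
- by move=> _ _; rewrite -addnA leq_addr.
- move=> hD; case: ifP => [_|nd]; first by rewrite leq_addr.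
  have mn : m < n.
    move/negbT/forallPn: nd => [x]; rewrite hD -leqNgt => H.
    exact: leq_ltn_trans H (ltn_ord x).
  case: (ltnP m.+1 n) => Hm.
  + pose v := Ordinal Hm.
    have nv : ~~ dom D v by rewrite hD /=; lia.
    apply: (@bigmin_leq2 _ (fun v => ~~ dom D v) (fun v => \max_(u in closed_nbhd e v) ind_val e k (u |: D)) _ v); first exact: nv.
    apply/bigmax_leqP => u; rewrite inE => Hu.
    have Hu' : (u : nat) = m \/ (u : nat) = m.+1 \/ (u : nat) = m.+2.
      by move: Hu; rewrite /path_rel -(inj_eq val_inj) /=; lia.
    have ltu := ltn_ord u.
    case: Hu' => [Hu'|[Hu'|Hu']].
    * apply: leq_trans (IHB _ (m + 2) _) _.
        by move=> x; rewrite dominatedU1 hD Hu'; lia.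
      move: (card_U1 D u); move: #|u |: D| #|D| => a b; clear -Hm mn; lia.
    * apply: leq_trans (IHB _ (m + 3) _) _.
        by move=> x; rewrite dominatedU1 hD Hu'; lia.
      move: (card_U1 D u); move: #|u |: D| #|D| => a b; clear -Hm mn; lia.
    * apply: leq_trans (IHC _ m mn _) _.
        by move=> x; rewrite dominatedU1 hD Hu'; lia.
      move: (card_U1 D u) ltu; rewrite Hu'; move: #|u |: D| #|D| => a b; clear -Hm mn; lia.
  + pose v := Ordinal mn.
    have nv : ~~ dom D v by rewrite hD /=; lia.
    apply: (@bigmin_leq2 _ (fun v => ~~ dom D v) (fun v => \max_(u in closed_nbhd e v) ind_val e k (u |: D)) _ v); first exact: nv.
    apply/bigmax_leqP => u; rewrite inE => Hu.
    have ltu := ltn_ord u.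
    have Hu' : (u : nat) = m \/ (u : nat).+1 = m.
      by move: Hu; rewrite /path_rel -(inj_eq val_inj) /=; lia.
    apply: leq_trans (IHB _ (m + 1) _) _.
      move=> x; have ltx := ltn_ord x.
      by rewrite dominatedU1 hD; case: Hu' => Hu'; lia.
    move: (card_U1 D u); move: #|u |: D| #|D| => a b; clear -Hm mn; lia.
- move=> mn hD; case: ifP => [_|nd]; first by rewrite -addnA leq_addr.
  pose v := Ordinal mn.
  have nv : ~~ dom D v by rewrite hD /= eqxx andbF.
  apply: (@bigmin_leq2 _ (fun v => ~~ dom D v) (fun v => \max_(u in closed_nbhd e v) ind_val e k (u |: D)) _ v); first exact: nv.
  apply/bigmax_leqP => u; rewrite inE => Hu.
  have ltu := ltn_ord u.
  have Hu' : (u : nat) = m \/ (u : nat) = m.+1 \/ (u : nat).+1 = m.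
    by move: Hu; rewrite /path_rel -(inj_eq val_inj) /=; lia.
  apply: leq_trans (IHB _ (m + 4) _) _.
    by move=> x; rewrite dominatedU1 hD; case: Hu' => [Hu'|[Hu'|Hu']]; lia.
  move: (card_U1 D u); move: #|u |: D| #|D| => a b; clear -mn; lia.
Qed.

End P.

Lemma even_count n : \sum_(i < n) (~~ odd i : nat) = (n+1) %/ 2.
Proof. elim: n => [|n IH]; first by rewrite big_ord0.
rewrite big_ord_recr /= IH. move: (odd_double_half n); case: (odd n) => /=; lia. Qed.

Theorem corollary5p3 (n : nat) : 1 <= n -> gamma_i (path_rel n) = (n + 1) %/ 2.
Proof.
move=> _; rewrite /gamma_i; apply/eqP; rewrite eqn_leq; apply/andP; split.
- have [H _] := UB n #|'I_n|.
  have H0 : forall x : 'I_n, dominated (path_rel n) set0 x = (x < 0).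
    by move=> x; rewrite ltn0; apply/existsP => -[y]; rewrite inE.
  by move: (H set0 0 H0); rewrite cards0 subn0 add0n.
- have L := @LB n #|'I_n| set0 (max_card _).
  apply: leq_trans L; rewrite cards0 add0n /gpot -even_count -sum1_card [X in _ <= X]big_mkcond /=.
  apply: eq_leq; apply: eq_bigr => i _; rewrite !inE /cnt.
  have -> : ~~ dominated (path_rel n) set0 i.
    by apply/existsP => -[y]; rewrite inE.
  case: (boolP (odd i)) => oi //=.
  have ip : i.-1 < n by apply: leq_ltn_trans (leq_pred _) (ltn_ord i).
  case: forallP => // /(_ (Ordinal ip)); rewrite /path_rel /=.
  have -> : (i.-1).+1 == i by rewrite prednK // lt0n; apply: contraTneq oi => ->.
  by rewrite orbT /= => /existsP[y]; rewrite inE.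
Qed.
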